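(* Let $L\in\mathcal L_n$. For $k\in[n]$ let $P_k$ be the $n\times n$ permutation matrix with $(P_k)_{i,j}=1$ iff $L_{i,j}=k$. Then $$\sum_{k=1}^n r(P_k)=\frac{n^2(n^2-1)}{12}.$$ The same identity holds when $P_1,\dots,P_n$ are instead the permutation matrices determined by the rows of $L$ (for row $i$, $(P_i)_{j,k}=1$ iff $L_{i,j}=k$) or by the columns of $L$ (for column $j$, $(P_j)_{i,k}=1$ iff $L_{i,j}=k$).
   Context: Let $[n]=\{1,\dots,n\}$. A Latin square of order $n$ is an $n\times n$ array with entries in $[n]$ in which each symbol occurs exactly once in each row and each column; $\mathcal L_n$ is the set of them. For an $n\times n$ matrix $P$, its corner-sum matrix is $\Sigma(P)_{i,j}=\sum_{a\le i,b\le j}P_{a,b}$ for $i,j\in\{0,\dots,n\}$. For a permutation matrix (or alternating sign matrix) $P$ of order $n$, $r(P)$ denotes its rank in the lattice of $n\times n$ alternating sign matrices under the Bruhat order (whose minimum is the identity $I_n$), namely $r(P)=\sum_{0\le i,j\le n}\big(\min(i,j)-\Sigma(P)_{i,j}\big)$. *)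

(* Defs.v *)
From mathcomp Require Import all_boot all_order all_algebra.
Set Implicit Arguments. Unset Strict Implicit. Unset Printing Implicit Defensive.
Import Order.TTheory GRing.Theory Num.Theory.
Local Open Scope ring_scope.

(* Symbols [n] = {1..n} are encoded as 'I_n = {0..n-1} (shift by one);
   rows/columns likewise indexed by 'I_n. *)

Definition latin_square (n : nat) (L : 'M['I_n]_n) : Prop :=
  (forall (i k : 'I_n), #|[set j : 'I_n | L i j == k]| = 1%N) /\
  (forall (j k : 'I_n), #|[set i : 'I_n | L i j == k]| = 1%N).

(* Corner-sum matrix: Sigma(P)_{i,j} = sum_{a <= i, b <= j} P_{a,b}
   (1-indexed), for i, j in {0..n}; in 0-indexed form a < i, b < j. *)
Definition corner_sum (n : nat) (P : 'M[int]_n) (i j : nat) : int :=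
  \sum_(a < n | (a < i)%N) \sum_(b < n | (b < j)%N) P a b.

(* Rank in the Bruhat order lattice of ASMs:
   r(P) = sum_{0 <= i,j <= n} (min(i,j) - Sigma(P)_{i,j}). *)
Definition asm_rank (n : nat) (P : 'M[int]_n) : int :=
  \sum_(i < n.+1) \sum_(j < n.+1) ((minn i j)%:Z - corner_sum P i j).

Definition symbol_pm (n : nat) (L : 'M['I_n]_n) (k : 'I_n) : 'M[int]_n :=
  \matrix_(i, j) ((L i j == k) : nat)%:Z.

Definition row_pm (n : nat) (L : 'M['I_n]_n) (i : 'I_n) : 'M[int]_n :=
  \matrix_(j, k) ((L i j == k) : nat)%:Z.

Definition col_pm (n : nat) (L : 'M['I_n]_n) (j : 'I_n) : 'M[int]_n :=
  \matrix_(i, k) ((L i j == k) : nat)%:Z.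

(* Main.v *)
Require Import Defs.
From mathcomp Require Import all_boot all_order all_algebra zify ring lra.
Import Order.TTheory GRing.Theory Num.Theory.
Local Open Scope ring_scope.

Lemma cnt (n i : nat) (x : int) : \sum_(a < n | (a < i)%N) x = x *+ minn i n.
Proof.
elim: n => [|n IH]; first by rewrite big_ord0 minn0.
rewrite big_mkcond big_ord_recr /= -big_mkcond IH.
case: ltnP => h.
  rewrite -mulrSr; congr (_ *+ _); lia.
rewrite addr0; congr (_ *+ _); lia.
Qed.

Lemma cs_sum (n : nat) (F : 'I_n -> 'M[int]_n) (i j : nat) :
  (forall a b, \sum_k F k a b = 1) ->
  \sum_k corner_sum (F k) i j = (minn i n * minn j n)%N%:Z.
Proof.
move=> H; rewrite /corner_sum exchange_big /=.
under eq_bigr => a _ do rewrite exchange_big /=.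
under eq_bigr => a _ do under eq_bigr => b _ do rewrite H.
rewrite cnt cnt -mulrnA.
by rewrite -natz mulnC.
Qed.

Lemma Posz_sum (I : finType) (P : pred I) (F : I -> nat) :
  Posz (\sum_(i | P i) F i)%N = \sum_(i | P i) Posz (F i).
Proof. by rewrite (big_morph Posz PoszD (erefl 0%:Z)). Qed.

Definition Amin (n : nat) : nat := \sum_(i < n.+1) \sum_(j < n.+1) minn i j.
Definition Bs (n : nat) : nat := \sum_(i < n.+1) i.

Lemma key (n : nat) (F : 'I_n -> 'M[int]_n) :
  (forall a b, \sum_k F k a b = 1) ->
  \sum_k asm_rank (F k) = (n * Amin n)%N%:Z - (Bs n * Bs n)%N%:Z.
Proof.
move=> H; rewrite /asm_rank exchange_big /=.
under eq_bigr => i _ do rewrite exchange_big /=.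
under eq_bigr => i _ do under eq_bigr => j _ do
  rewrite sumrB cs_sum // sumr_const card_ord.
rewrite /Amin /Bs big_distrr /= big_distrl /=.
under eq_bigr => i _ do rewrite sumrB.
rewrite !Posz_sum sumrB; congr (_ - _); apply: eq_bigr => i _; last first.
  rewrite PoszM Posz_sum mulr_sumr; apply: eq_bigr => j _.
  by rewrite (minn_idPl (leq_ord i)) (minn_idPl (leq_ord j)) PoszM.
rewrite PoszM Posz_sum mulr_sumr; apply: eq_bigr => j _.
by rewrite -mulr_natl natz.
Qed.

Local Open Scope nat_scope.
Lemma Bs_eq n : (2 * Bs n = n * n.+1)%N.
Proof.
elim: n => [|n IH]; first by rewrite /Bs big_ord_recr big_ord0.
rewrite /Bs big_ord_recr /= -/(Bs n). lia.
Qed.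
Lemma Amin_rec n : Amin n.+1 = (Amin n + 2 * Bs n + n.+1)%N.
Proof.
rewrite /Amin big_ord_recr /=.
under eq_bigr => i _ do rewrite big_ord_recr /= (minn_idPl (leq_trans (leq_ord i) (leqnSn _))).
rewrite big_split /= -/(Amin n) -/(Bs n).
rewrite big_ord_recr /= minnn.
under eq_bigr => j _ do rewrite (minn_idPr (leq_trans (leq_ord j) (leqnSn _))).
rewrite -/(Bs n). lia.
Qed.
Lemma Amin_eq n : (6 * Amin n = n * n.+1 * (2 * n).+1)%N.
Proof.
elim: n => [|n IH]; first by rewrite /Amin !big_ord_recr !big_ord0.
rewrite Amin_rec. have := Bs_eq n. lia.
Qed.

Local Open Scope ring_scope.
Lemma arith n A B : (6 * A = n * n.+1 * (2 * n).+1)%N -> (2 * B = n * n.+1)%N ->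
  (12 * (n * A) = 12 * (B * B) + n ^ 2 * (n ^ 2 - 1))%N.
Proof.
move=> hA hB.
have e1 : (12 * (n * A) = 2 * n * (6 * A))%N by nia.
have e2 : (12 * (B * B) = 3 * ((2 * B) * (2 * B)))%N by nia.
rewrite e1 e2 hA hB.
case: n {hA hB e1 e2} => [|m]; first by [].
have -> : ((m.+1) ^ 2 - 1 = m * m.+2)%N by nia.
nia.
Qed.
Lemma fin n A B : (12 * (n * A) = 12 * (B * B) + n ^ 2 * (n ^ 2 - 1))%N ->
  (((n * A)%N%:Z - (B * B)%N%:Z)%:~R : rat) = ((n ^ 2 * (n ^ 2 - 1))%N)%:R / 12.
Proof.
rewrite rmorphB /= !pmulrn.
move: (n * A)%N (B * B)%N (n ^ 2 * (n ^ 2 - 1))%N => a b c h.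
have e : 12 * (a%:R : rat) = 12 * b%:R + c%:R by rewrite -!natrM -natrD h.
apply: (@mulfI _ 12); first by [].
lra.
Qed.

Lemma card_sum (n : nat) (P : pred 'I_n) :
  \sum_(k < n) ((P k : nat) : int) = #|[set k | P k]|%:Z.
Proof.
rewrite -sum1_card Posz_sum [RHS]big_mkcond /=; apply: eq_bigr => k _.
by rewrite inE; case: (P k).
Qed.

Theorem mainTheorem13 (n : nat) (L : 'M['I_n]_n) :
  latin_square L ->
  [/\ ((\sum_(k < n) asm_rank (symbol_pm L k))%:~R : rat)
        = ((n ^ 2 * (n ^ 2 - 1))%N)%:R / 12,
      ((\sum_(i < n) asm_rank (row_pm L i))%:~R : rat)
        = ((n ^ 2 * (n ^ 2 - 1))%N)%:R / 12 &
      ((\sum_(j < n) asm_rank (col_pm L j))%:~R : rat)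
        = ((n ^ 2 * (n ^ 2 - 1))%N)%:R / 12].
Proof.
move=> [hr hc].
have ar := @arith _ _ _ (Amin_eq n) (Bs_eq n).
split; rewrite key ?fin // => a b; under eq_bigr => k _ do rewrite mxE.
- rewrite card_sum.
  have -> : [set k : 'I_n | L a b == k] = [set L a b].
    by apply/setP => k; rewrite !inE eq_sym.
  by rewrite cards1.
- by rewrite card_sum hc.
- by rewrite card_sum hr.
Qed.
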